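(* Let $\sigma$ be a pre-weight function and $\mathfrak{M}_\sigma=\{S^{(x)}:x>0\}$ its associated weight matrix. For $k\in\mathbb{N}_{\ge1}$ let $\Lambda^k=\{a\in\mathbb{C}^{\mathbb{N}}:\sup_{j\in\mathbb{N}}|a_j|/(k^jS^{(k)}_j)<\infty\}$, a Banach space with this supremum as norm. Then the inclusion $\Lambda^k\hookrightarrow\Lambda^{k+1}$ is compact. In particular, $\Lambda^{\{\mathfrak{M}_\sigma\}}=\operatorname{ind}_{k}\Lambda^k$ (the inductive limit) is a (DFS)-space.
   Context: A pre-weight function is a continuous increasing $\sigma:[0,\infty)\to[0,\infty)$ with $\sigma(0)=0$, $\sigma(t)\to\infty$, $\log t=o(\sigma(t))$, $t\mapsto\sigma(e^t)$ convex. $\varphi^*_\sigma(x)=\sup_{y\ge0}(xy-\sigma(e^y))$, and $S^{(x)}_j=\exp(\frac1x\varphi^*_\sigma(xj))$. A (DFS)-space is a countable inductive limit of Banach spaces with compact connecting maps. *)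

(* Defs.v *)
From HB Require Import structures.
From mathcomp Require Import all_boot all_order all_algebra.
From mathcomp Require Import all_classical all_reals all_analysis.
From mathcomp Require Import complex.
Set Implicit Arguments. Unset Strict Implicit. Unset Printing Implicit Defensive.
Import Order.TTheory GRing.Theory Num.Theory.
Import numFieldNormedType.Exports.
Local Open Scope classical_set_scope.
Local Open Scope ring_scope.

Definition cabs (R : realType) (z : R[i]) : R :=
  Num.sqrt (complex.Re z ^+ 2 + complex.Im z ^+ 2).

(* pre-weight function sigma : [0,oo) -> [0,oo) (only values on [0,oo) matter) *)
Definition pre_weight (R : realType) (sigma : R -> R) : Prop :=
  {within `[(0:R), +oo[, continuous sigma} /\
      (forall t, 0 <= t -> 0 <= sigma t) /\
      (forall s t, 0 <= s -> s <= t -> sigma s <= sigma t) /\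
      sigma 0 = 0 /\
      (sigma x @[x --> +oo] --> +oo) /\
      ((fun t => ln t / sigma t) x @[x --> +oo] --> (0 : R)) /\
      (forall (s t l : R), 0 <= l <= 1 ->
         sigma (expR (l * s + (1 - l) * t))
           <= l * sigma (expR s) + (1 - l) * sigma (expR t)).

Definition phistar (R : realType) (sigma : R -> R) (x : R) : R :=
  sup [set x * y - sigma (expR y) | y in [set y : R | 0 <= y]].

Definition Sw (R : realType) (sigma : R -> R) (x : R) (j : nat) : R :=
  expR (x^-1 * phistar sigma (x * j%:R)).

Definition wq (R : realType) (sigma : R -> R) (k : nat) (a : nat -> R[i])
  (j : nat) : R :=
  cabs (a j) / ((k%:R) ^+ j * Sw sigma k%:R j).

Definition Lambda (R : realType) (sigma : R -> R) (k : nat) : set (nat -> R[i]) :=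
  [set a | exists M : R, forall j, wq sigma k a j <= M].

Definition Lnorm_k (R : realType) (sigma : R -> R) (k : nat) (a : nat -> R[i]) : R :=
  sup (range (wq sigma k a)).

Definition complete_in (R : realType) (X : set (nat -> R[i]))
  (N : (nat -> R[i]) -> R) : Prop :=
  forall u : nat -> (nat -> R[i]), (forall n, X (u n)) ->
    (forall e : R, 0 < e -> exists n0, forall m n, (n0 <= m)%N -> (n0 <= n)%N ->
        N (u m - u n) < e) ->
    exists2 b, X b & (fun n => N (u n - b)) @ \oo --> (0 : R).

(* the inclusion (X,NX) -> (Y,NY) is a compact linear map: X is contained in Y,
   and the image of the closed unit ball of X is relatively compact in Y,
   i.e. every sequence in the unit ball of X has a subsequence converging in
   (Y, NY) to an element of Y. *)
Definition compact_inclusion (R : realType) (X Y : set (nat -> R[i]))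
  (NX NY : (nat -> R[i]) -> R) : Prop :=
  X `<=` Y /\
  forall u : nat -> (nat -> R[i]), (forall n, X (u n) /\ NX (u n) <= 1) ->
    exists phi : nat -> nat, {homo phi : m n / (m < n)%N >-> (m < n)%N} /\
      exists2 b, Y b & (fun n => NY (u (phi n) - b)) @ \oo --> (0 : R).

(* (DFS)-space: countable inductive limit of the Banach spaces
   (X k, N k), k >= 1, with compact connecting maps X k -> X (k+1). *)
Definition DFS_spectrum (R : realType) (X : nat -> set (nat -> R[i]))
  (N : nat -> (nat -> R[i]) -> R) : Prop :=
  forall k, (1 <= k)%N ->
    complete_in (X k) (N k) /\ compact_inclusion (X k) (X k.+1) (N k) (N k.+1).

(* Main.v *)
Require Import Defs.
From HB Require Import structures.
From mathcomp Require Import all_boot all_order all_algebra.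
From mathcomp Require Import all_classical all_reals all_analysis.
From mathcomp Require Import complex.
From mathcomp.algebra_tactics Require Import ring lra.
From mathcomp Require Import zify.
Import Order.TTheory GRing.Theory Num.Theory.
Import numFieldNormedType.Exports.
Local Open Scope classical_set_scope.
Local Open Scope ring_scope.

Section S.
Variable R : realType.
Implicit Types z w : R[i].

Lemma cabs_ge0 z : 0 <= cabs z.
Proof. exact: sqrtr_ge0. Qed.

Lemma cabs_Re z : `|complex.Re z| <= cabs z.
Proof.
rewrite /cabs -sqrtr_sqr; apply: ler_wsqrtr.
by rewrite lerDl sqr_ge0.
Qed.

Lemma cabs_Im z : `|complex.Im z| <= cabs z.
Proof.
rewrite /cabs -sqrtr_sqr; apply: ler_wsqrtr.
by rewrite lerDr sqr_ge0.
Qed.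

Lemma cabs_le z : cabs z <= `|complex.Re z| + `|complex.Im z|.
Proof.
rewrite /cabs -[X in _ <= X]ger0_norm ?addr_ge0 // -sqrtr_sqr; apply: ler_wsqrtr.
rewrite -[complex.Re z ^+ 2]real_normK ?num_real // -[complex.Im z ^+ 2]real_normK ?num_real //.
have h (a b : R) : 0 <= a -> 0 <= b -> a ^+ 2 + b ^+ 2 <= (a + b) ^+ 2 by move=> *; nra.
exact: h.
Qed.

Lemma ReB z w : complex.Re (z - w) = complex.Re z - complex.Re w.
Proof. case: z => a b; case: w => c d. by [].
Qed.
Lemma ImB z w : complex.Im (z - w) = complex.Im z - complex.Im w.
Proof. case: z => a b; case: w => c d. by [].
Qed.


Variable sigma : R -> R.

Definition ww (k : nat) (j : nat) : R := (k%:R) ^+ j * Sw sigma k%:R j.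

Lemma ww_gt0 k j : (0 < k)%N -> 0 < ww k j.
Proof. by move=> k0; rewrite /ww mulr_gt0 ?expR_gt0 // exprn_gt0 // ltr0n. Qed.

Lemma wqE k a j : wq sigma k a j = cabs (a j) / ww k j.
Proof. by []. Qed.

Lemma wq_ge0 k a j : 0 <= wq sigma k a j.
Proof. by rewrite /wq divr_ge0 ?cabs_ge0 // mulr_ge0 ?exprn_ge0 ?ler0n // expR_ge0. Qed.

Lemma Lnorm_ub k a j : Lambda sigma k a -> wq sigma k a j <= Lnorm_k sigma k a.
Proof.
move=> [M hM]; apply: ub_le_sup; last by exists j.
by exists M => _ [i _ <-].
Qed.

Lemma Lnorm_le k a M : (forall j, wq sigma k a j <= M) -> Lnorm_k sigma k a <= M.
Proof. by move=> h; apply: ge_sup; [exists (wq sigma k a 0); exists 0%N | move=> _ [i _ <-]]. Qed.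

Lemma Lnorm_ge0 k a : Lambda sigma k a -> 0 <= Lnorm_k sigma k a.
Proof. by move=> h; exact: le_trans (wq_ge0 k a 0) (Lnorm_ub k a 0 h). Qed.

Lemma cabs_bound k a j : (0 < k)%N -> Lambda sigma k a ->
  cabs (a j) <= Lnorm_k sigma k a * ww k j.
Proof.
move=> k0 h; rewrite -ler_pdivrMr ?ww_gt0 //; exact: Lnorm_ub.
Qed.

Lemma wq_le k a j M : (0 < k)%N -> cabs (a j) <= M * ww k j -> wq sigma k a j <= M.
Proof. by move=> k0 h; rewrite wqE ler_pdivrMr ?ww_gt0. Qed.


Lemma pinfty_ex (P : R -> Prop) : (\forall t \near +oo, P t) -> exists M : R, forall t, M < t -> P t.
Proof. by move=> [M [_ hM]]; exists M. Qed.

Lemma phistar_ub x : pre_weight sigma -> 0 <= x ->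
  has_ubound [set x * y - sigma (expR y) | y in [set y : R | 0 <= y]].
Proof.
move=> [_ [s0 [_ [_ [sinf [lns _]]]]]] x0.
have e0 : 0 < (x + 1)^-1 by rewrite invr_gt0 ltr_wpDl.
have /cvgryPgt h1 := sinf.
have /cvgr_dist_lt h2 := lns.
have [M hM] := pinfty_ex _ (filterI (h1 0) (h2 _ e0)).
have M1 : 1 <= Num.max M 1 by rewrite le_max lexx orbT.
exists (x * ln (Num.max M 1)) => _ [y /= y0 <-].
have sge0 : 0 <= sigma (expR y) by apply: s0; exact: expR_ge0.
have lnge0 : 0 <= ln (Num.max M 1) by apply: ln_ge0.
have [My|yM] := ltP M (expR y).
  have [sp hl] := hM _ My.
  rewrite sub0r normrN expRK ger0_norm ?divr_ge0 // in hl.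
  rewrite ltr_pdivrMr // in hl.
  have : y * (x + 1) < sigma (expR y) by rewrite -ltr_pdivlMr ?ltr_wpDl // mulrC.
  move=> h; apply: le_trans (_ : 0 <= _); last by rewrite mulr_ge0.
  nra.
have yl : y <= ln (Num.max M 1).
  rewrite -[X in X <= _]expRK ler_ln ?posrE ?expR_gt0 ?(lt_le_trans ltr01) //.
  by apply: le_trans yM _; rewrite le_max lexx.
nra.
Qed.

Lemma inv_le_aux (a b P Q : R) : 0 < a -> 0 < b -> b * P <= a * Q -> a^-1 * P <= b^-1 * Q.
Proof.
move=> a0 b0 h.
have -> : a^-1 * P = (a * b)^-1 * (b * P) by field; rewrite ?gt_eqF.
have -> : b^-1 * Q = (a * b)^-1 * (a * Q) by field; rewrite ?gt_eqF.
by rewrite ler_wpM2l // invr_ge0 mulr_ge0 // ltW.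
Qed.

Lemma Sw_mono k j : pre_weight sigma -> (0 < k)%N -> Sw sigma k%:R j <= Sw sigma k.+1%:R j.
Proof.
move=> pw k0; rewrite /Sw ler_expR; apply: inv_le_aux; rewrite ?ltr0n //.
have s0 := proj1 (proj2 pw).
have hub := phistar_ub _ pw (mulr_ge0 (ler0n R k.+1) (ler0n R j)).
rewrite /phistar.
set Q := sup _.
rewrite mulrC -ler_pdivlMr ?ltr0n //.
apply: ge_sup; first by eexists; exists 0 => //=.
move=> _ [y /= y0 <-].
rewrite ler_pdivlMr ?ltr0n //.
have := ub_le_sup hub (ex_intro2 _ _ y y0 erefl).
have := s0 _ (expR_ge0 y).
rewrite -addn1 natrD. have := ler0n R k. have := ler0n R j.
nra.
Qed.

Lemma nat_bern (k j : nat) : (k ^ j * (k + j) <= k * k.+1 ^ j)%N.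
Proof.
elim: j => [|j IH]; first by rewrite !expn0 addn0 mul1n muln1.
have hp : (k ^ j <= k.+1 ^ j)%N by case: (j) => [|i]; rewrite ?expn0 // leq_exp2r.
rewrite !expnS; nia.
Qed.

Lemma ww_ratio k j : pre_weight sigma -> (0 < k)%N ->
  ww k j * (k + j)%:R <= k%:R * ww k.+1 j.
Proof.
move=> pw k0; rewrite /ww mulrAC mulrA.
have h1 : (k%:R ^+ j * (k + j)%:R) <= k%:R * (k.+1%:R ^+ j) :> R.
  by rewrite -!natrX -!natrM ler_nat nat_bern.
by apply: ler_pM => //; rewrite ?mulr_ge0 ?exprn_ge0 ?expR_ge0 ?(Sw_mono _ _ pw k0).
Qed.

Lemma ww_mono k j : pre_weight sigma -> (0 < k)%N -> ww k j <= ww k.+1 j.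
Proof.
move=> pw k0; rewrite /ww; apply: ler_pM; rewrite ?exprn_ge0 ?expR_ge0 ?(Sw_mono _ _ pw k0) //.
by rewrite lerXn2r ?nnegrE // ler_nat.
Qed.

Local Notation PT := (prod_topology (fun _ : nat * bool => R)).

Local Instance PT_filter (b : PT) : Filter (nbhs b) := @nbhs_filter _ b.

Lemma nbhs_coord (b : PT) i e : 0 < e -> nbhs b [set g : PT | `|b i - g i| < e].
Proof.
move=> e0; have h := @proj_continuous _ (fun _ : nat * bool => R) i b.
have hb : nbhs (b i) (ball (b i) e) := nbhsx_ballx (b i) e e0.
have h2 := h _ hb.
have h3 : nbhs b [set g : PT | ball (b i) e (g i)] := h2.
exact h3.
Qed.

Lemma nbhs_box (b : PT) (eps : nat -> R) m :
  (forall j, 0 < eps j) ->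
  nbhs b [set g : PT | forall j bo, (j <= m)%N -> `|b (j, bo) - g (j, bo)| < eps j].
Proof.
move=> ep; elim: m => [|m IH].
  have H := @filterI _ _ (PT_filter b) _ _ (nbhs_coord b (0%N, true) _ (ep 0%N)) (nbhs_coord b (0%N, false) _ (ep 0%N)).
  apply: (@filterS _ _ (PT_filter b) _ _ _ H).
  by move=> g [h1 h2] j [] //; rewrite leqn0 => /eqP ->.
have H := @filterI _ _ (PT_filter b) _ _ IH (@filterI _ _ (PT_filter b) _ _ (nbhs_coord b (m.+1, true) _ (ep m.+1)) (nbhs_coord b (m.+1, false) _ (ep m.+1))).
apply: (@filterS _ _ (PT_filter b) _ _ _ H).
move=> g [h0 [h1 h2]] j bo; rewrite leq_eqVlt ltnS => /orP[/eqP ->|]; last exact: h0.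
by case: bo.
Qed.

Lemma compact_incl k : pre_weight sigma -> (0 < k)%N ->
  compact_inclusion (Lambda sigma k) (Lambda sigma k.+1) (Lnorm_k sigma k) (Lnorm_k sigma k.+1).
Proof.
move=> pw k0; split.
  move=> a [M hM]; exists M => j; apply: wq_le => //.
  have hM0 : 0 <= M := le_trans (wq_ge0 k a j) (hM j).
  have := hM j; rewrite wqE ler_pdivrMr ?ww_gt0 // => h.
  by apply: le_trans h _; rewrite ler_wpM2l // ww_mono.
move=> u hu.
have cb n j : cabs (u n j) <= ww k j.
  have [h1 h2] := hu n; apply: le_trans (cabs_bound k (u n) j k0 h1) _.
  by apply: ler_piMl; [exact: ltW (ww_gt0 _ _ k0) | exact: h2].
pose v n : PT := fun i => if i.2 then complex.Re (u n i.1) else complex.Im (u n i.1).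
pose A := fun i : nat * bool => `[- ww k i.1, ww k i.1]%classic.
have cA := @tychonoff _ (fun _ : nat * bool => R) A (fun i => @segment_compact R _ _).
have vA n : (forall i, A i (v n i)).
  move=> [j bo]; rewrite /A /= in_itv /= -ler_norml.
  by case: bo => /=; apply: le_trans (cb n j); [exact: cabs_Re | exact: cabs_Im].
have Fv : (v @ \oo) [set f : PT | forall i, A i (f i)] by exists 0%N => // n _; exact: vA.
have [b [bA bcl]] := cA (v @ \oo) _ Fv.
have kS0 : (0 < k.+1)%N by [].
have close m N : exists n, (N <= n)%N /\ forall j bo, (j <= m)%N ->
    `|b (j, bo) - v n (j, bo)| < ww k.+1 j / m.+1%:R.
  have FN : (v @ \oo) [set g : PT | exists2 n, (N <= n)%N & g = v n].
    by exists N => // n /= hn; exists n.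
  have nb := nbhs_box b (fun j => ww k.+1 j / m.+1%:R) m
    (fun j => divr_gt0 (ww_gt0 k.+1 j kS0) (ltr0Sn _ _)).
  have [g [[n hn ->] hg]] := bcl _ _ FN nb.
  by exists n.
pose g m N := proj1_sig (cid (close m N)).
have gP m N : (N <= g m N)%N /\ forall j bo, (j <= m)%N ->
    `|b (j, bo) - v (g m N) (j, bo)| < ww k.+1 j / m.+1%:R := proj2_sig (cid (close m N)).
pose phi := fix f (m : nat) : nat := match m with 0%N => g 0%N 0%N | m'.+1 => g m'.+1 (f m').+1 end.
have phiS m : (phi m < phi m.+1)%N := proj1 (gP m.+1 (phi m).+1).
have phiC m : forall j bo, (j <= m)%N ->
    `|b (j, bo) - v (phi m) (j, bo)| < ww k.+1 j / m.+1%:R.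
  by case: m => [|m]; exact: (proj2 (gP _ _)).
exists phi; split; first exact: (homo_ltn ltn_trans phiS).
have bAj j bo : `|b (j, bo)| <= ww k j.
  by have := bA (j, bo); rewrite /A /= in_itv /= -ler_norml.
pose bb j : R[i] := complex.Complex (b (j, true)) (b (j, false)).
exists bb.
  exists 2 => j; apply: wq_le => //.
  apply: le_trans (cabs_le _) _; rewrite /=.
  have := bAj j true; have := bAj j false; have := ww_mono k j pw k0.
  lra.
pose C : R := 4 * k%:R + 2.
have C0 : 0 < C by rewrite /C; have := ler0n R k; lra.
have wb m j : wq sigma k.+1 (u (phi m) - bb) j <= C / m.+1%:R.
  apply: wq_le => //.
  rewrite mulrAC ler_pdivlMr ?ltr0n //.
  apply: le_trans (ler_wpM2r (ler0n _ _) (cabs_le _)) _.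
  rewrite /= ReB ImB /=.
  have W0 := ww_gt0 k.+1 j kS0.
  have k0' := ler0n R k.
  have M0 : (0 : R) < m.+1%:R by rewrite ltr0n.
  case: (leqP j m) => hj.
    have h1 := phiC m j true hj; have h2 := phiC m j false hj.
    rewrite /= distrC ltr_pdivlMr // in h1.
    rewrite /= distrC ltr_pdivlMr // in h2.
    rewrite /C; nra.
  have r1 : `|complex.Re (u (phi m) j) - b (j, true)| <= 2 * ww k j.
    apply: le_trans (ler_normB _ _) _; have := bAj j true; have := cabs_Re (u (phi m) j).
    have := cb (phi m) j; lra.
  have r2 : `|complex.Im (u (phi m) j) - b (j, false)| <= 2 * ww k j.
    apply: le_trans (ler_normB _ _) _; have := bAj j false; have := cabs_Im (u (phi m) j).
    have := cb (phi m) j; lra.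
  have rat := ww_ratio k j pw k0.
  have hmj : m.+1%:R <= (k + j)%:R :> R by rewrite ler_nat; lia.
  have wk0 := ltW (ww_gt0 k j k0).
  rewrite /C natrD in hmj rat *; nra.
apply/cvgrPdist_lt => e e0.
exists (Num.truncn (C / e)) => // n /= hn.
have hL : Lambda sigma k.+1 (u (phi n) - bb) by exists (C / n.+1%:R); exact: wb.
rewrite sub0r normrN ger0_norm; last exact: Lnorm_ge0.
apply: le_lt_trans (Lnorm_le _ _ _ (wb n)) _.
rewrite ltr_pdivrMr ?ltr0n //.
have := truncnS_gt (C / e); rewrite ltr_pdivrMr // => h.
have : (Num.truncn (C / e)).+1%:R <= n.+1%:R :> R by rewrite ler_nat ltnS.
nra.
Qed.

Lemma cabs_sub (z w : R[i]) : cabs (z - w) <= 2 * cabs z + 2 * cabs w.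
Proof.
apply: le_trans (cabs_le _) _; rewrite ReB ImB.
have := ler_normB (complex.Re z) (complex.Re w); have := ler_normB (complex.Im z) (complex.Im w).
have := cabs_Re z; have := cabs_Re w; have := cabs_Im z; have := cabs_Im w.
lra.
Qed.

Lemma complete_k k : (0 < k)%N -> complete_in (Lambda sigma k) (Lnorm_k sigma k).
Proof.
move=> k0 u uL uC.
have W0 j := ww_gt0 k j k0.
have LB a c : Lambda sigma k a -> Lambda sigma k c -> Lambda sigma k (a - c).
  move=> ha hc; exists (2 * Lnorm_k sigma k a + 2 * Lnorm_k sigma k c) => j; apply: wq_le => //.
  have -> : (a - c) j = a j - c j by [].
  apply: le_trans (cabs_sub _ _) _.
  have := cabs_bound k a j k0 ha; have := cabs_bound k c j k0 hc.
  have := W0 j; nra.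
pose r j (bo : bool) n := if bo then complex.Re (u n j) else complex.Im (u n j).
have rB j bo n m : `|r j bo n - r j bo m| <= cabs (u n j - u m j).
  by case: bo; rewrite /r -?ReB -?ImB ?cabs_Re ?cabs_Im.
have cd n m j : cabs (u n j - u m j) <= Lnorm_k sigma k (u n - u m) * ww k j.
  exact: (cabs_bound k _ j k0 (LB _ _ (uL n) (uL m))).
have rc j bo : cvg (r j bo @ \oo).
  apply: cauchy_cvg; apply: cauchy_exP => e e0.
  have [n0 hn0] := uC (e / ww k j) (divr_gt0 e0 (W0 j)).
  exists (r j bo n0); exists n0 => // n /= hn.
  rewrite -ball_normE /=.
  apply: le_lt_trans (rB _ _ _ _) _.
  apply: le_lt_trans (cd _ _ _) _.
  rewrite -ltr_pdivlMr //; exact: hn0.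
pose xr j bo := lim (r j bo @ \oo).
have est e : 0 < e -> exists n0, forall n, (n0 <= n)%N -> forall j bo,
    `|r j bo n - xr j bo| <= e * ww k j.
  move=> e0; have [n0 hn0] := uC e e0; exists n0 => n hn j bo.
  apply: (ler_cvg_to (cvg_norm (cvgB (cvg_cst (r j bo n)) (rc j bo))) (cvg_cst _)).
  exists n0 => // m /= hm.
  apply: le_trans (rB _ _ _ _) _; apply: le_trans (cd _ _ _) _.
  by rewrite ler_wpM2r ?ltW //; exact: hn0.
pose b j := complex.Complex (xr j true) (xr j false).
have cbound n j : cabs (u n j - b j) <= `|r j true n - xr j true| + `|r j false n - xr j false|.
  by apply: le_trans (cabs_le _) _; rewrite ReB ImB.
exists b.
  have [n0 hn0] := est 1 ltr01.
  exists (2 * Lnorm_k sigma k (u n0) + 2 * 2) => j; apply: wq_le => //.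
  have -> : b j = u n0 j - (u n0 j - b j) by rewrite opprB addrC subrK.
  apply: le_trans (cabs_sub _ _) _.
  have := cabs_bound k _ j k0 (uL n0); have := cbound n0 j.
  have := hn0 n0 (leqnn _) j true; have := hn0 n0 (leqnn _) j false.
  have := W0 j; nra.
apply/cvgrPdist_lt => e e0.
have [n0 hn0] := est (e / 4) (divr_gt0 e0 (ltr0Sn R 3)).
exists n0 => // n /= hn.
have hq j : wq sigma k (u n - b) j <= e / 2.
  apply: wq_le => //.
  have -> : (u n - b) j = u n j - b j by [].
  apply: le_trans (cbound n j) _.
  have := hn0 n hn j true; have := hn0 n hn j false; have := W0 j; nra.
rewrite sub0r normrN ger0_norm; last by apply: Lnorm_ge0; exists (e / 2); exact: hq.
apply: le_lt_trans (Lnorm_le _ _ _ hq) _; lra.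
Qed.
End S.
Theorem lemmaA2 (R : realType) (sigma : R -> R) :
  pre_weight sigma ->
  (forall k : nat, (1 <= k)%N ->
     compact_inclusion (Lambda sigma k) (Lambda sigma k.+1)
                       (Lnorm_k sigma k) (Lnorm_k sigma k.+1)) /\
  DFS_spectrum (Lambda sigma) (Lnorm_k sigma).
Proof.
move=> pw; split => k k1; first exact: compact_incl.
by split; [exact: complete_k | exact: compact_incl].
Qed.
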